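(* Let $\varphi\colon (A,m,K)\to (B,n,L)$ be a local homomorphism of noetherian local rings. For a proper ideal $I$ of $A$, let $\pi_I\colon A\to A/I$ and $\pi_{IB}\colon B\to B/IB$ be the canonical surjections. (1) $\operatorname{rd}(\pi_I)\geq \operatorname{rd}(\pi_{IB})$ for every proper ideal $I$ of $A$. (2) $\varphi$ is basically regular if and only if $\operatorname{rd}(\pi_I)=\operatorname{rd}(\pi_{IB})$ for each proper ideal $I$ of $A$.
   Context: All rings are commutative and noetherian with identity. A local homomorphism $\varphi\colon (A,m,K)\to(B,n,L)$ satisfies $\varphi(m)\subseteq n$. The regularity defect $\operatorname{rd}(\varphi)$ is the $L$-dimension of the kernel of the natural $L$-linear map $m/m^2\otimes_K L\to n/n^2$, $\bar x\otimes\bar b\mapsto \overline{\varphi(x)b}$; $\varphi$ is basically regular if for every minimal basis (minimal generating set) $x_1,\dots,x_r$ of $m$, the elements $\varphi(x_1),\dots,\varphi(x_r)$ are part of a minimal basis of $n$ (vacuously true if $A$ is a field). *)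

(* Defs.v *)
From HB Require Import structures.
From Stdlib Require Import ClassicalEpsilon.
From mathcomp Require Import all_boot all_order all_algebra.
From mathcomp Require Import generic_quotient ring_quotient.
From mathcomp Require Import boolp.

Set Implicit Arguments.
Unset Strict Implicit.
Unset Printing Implicit Defensive.

Import GRing.Theory.
Local Open Scope ring_scope.

Section Defs.
Variable R : comNzRingType.

(* non-units of R; in a local ring this is the maximal ideal *)
Definition nonunit : pred R := fun x => ~~ `[< exists y : R, x * y = 1 >].

Definition is_ideal (P : R -> Prop) : Prop :=
  P 0 /\ forall a u v, P u -> P v -> P (a * u + v).

Definition gen (s : seq R) (x : R) : Prop :=
  exists c : seq R, x = \sum_(i < size s) c`_i * s`_i.

Definition noetherian : Prop :=
  forall P, is_ideal P -> exists s : seq R, forall x, P x <-> gen s x.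

Definition local_ring : Prop := is_ideal (fun x => nonunit x).

Definition in_msq (x : R) : Prop :=
  exists s : seq (R * R),
    all (fun p => nonunit p.1 && nonunit p.2) s /\ x = \sum_(p <- s) p.1 * p.2.

Definition minimal_basis (x : seq R) : Prop :=
  (forall y, nonunit y <-> gen x y) /\
  forall z : seq R, (forall y, nonunit y <-> gen z y) -> (size x <= size z)%N.

End Defs.

Section Rd.
Variables (R S : comNzRingType) (f : R -> S).

(* Given a minimal basis x = x_1..x_r of m, m/m^2 (x)_K L = L^r, and the natural
   map L^r -> n/n^2 sends (s_i) to the class of \sum_i f(x_i) s_i.
   [ker_family x k]: there are k vectors (with representatives in S^r) lying in
   the kernel which are linearly independent over L = S/n. *)
Definition ker_family (x : seq R) (k : nat) : Prop :=
  exists v : 'I_k -> 'I_(size x) -> S,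
    (forall j, in_msq (\sum_(i < size x) f x`_i * v j i)) /\
    (forall c : 'I_k -> S,
        (forall i, nonunit (\sum_(j < k) c j * v j i)) -> forall j, nonunit (c j)).

Definition kerdim (x : seq R) : nat :=
  \max_(k < (size x).+1 | `[< ker_family x k >]) k.

Definition rd : nat :=
  kerdim (epsilon (inhabits [::]) (fun x : seq R => minimal_basis x)).

Definition basically_regular : Prop :=
  forall x : seq R, minimal_basis x ->
    exists y : seq S, minimal_basis (map f x ++ y).

Definition local_hom : Prop :=
  [/\ local_ring R, local_ring S & forall a, nonunit a -> nonunit (f a)].

End Rd.

Definition ext_ideal (R S : comNzRingType) (f : R -> S) (Hf : local_hom f)
  (I : idealr R) : pred S := fun b =>
  `[< exists s : seq (R * S),
        all (fun p => p.1 \in I) s /\ b = \sum_(p <- s) f p.1 * p.2 >].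

Section Ext.
Variables (R S : comNzRingType) (f : R -> S) (Hf : local_hom f) (I : idealr R).

Lemma ext_ideal_closed : idealr_closed (ext_ideal Hf I).
Proof.
have [_ [n0 nD] fn] := Hf.
split.
- by apply/asboolP; exists [::]; rewrite big_nil.
- apply/negP => /asboolP [s [sI e]].
  have : nonunit (\sum_(p <- s) f p.1 * p.2).
    elim: s sI {e} => [|p s IH] /=; first by rewrite big_nil.
    case/andP => pI sI; rewrite big_cons mulrC.
    apply: nD; last exact: IH; apply: fn; apply/negP => /asboolP [y py].
    by move: (idealMr y pI); rewrite mulrC py idealr1.
  by rewrite -e /nonunit => /negP; apply; apply/asboolP; exists 1; rewrite mulr1.
- move=> a u v /asboolP [su [suI ->]] /asboolP [sv [svI ->]].
  apply/asboolP; exists ([seq (p.1, a * p.2) | p <- su] ++ sv); split.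
    by rewrite all_cat svI andbT all_map.
  rewrite big_cat big_map /= big_distrr /=; congr (_ + _).
  by apply: eq_bigr => p _; rewrite mulrCA.
Qed.

HB.instance Definition _ := isIdealr.Build S (ext_ideal Hf I) ext_ideal_closed.

End Ext.


Definition canon_surj (R : comNzRingType) (I : idealr R) : R -> {ideal_quot I} :=
  (\pi_({ideal_quot I}))%qT.

(* Main.v *)
Require Import Defs.
From HB Require Import structures.
From mathcomp Require Import all_boot all_order all_algebra.
From mathcomp Require Import generic_quotient ring_quotient.
From Stdlib Require Import ClassicalEpsilon Classical.
From mathcomp Require Import boolp zify ring.
Set Implicit Arguments. Unset Strict Implicit. Unset Printing Implicit Defensive.
Import GRing.Theory.
Set Warnings "-redundant-canonical-projection -notation-overridden -ambiguous-paths".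
Local Open Scope ring_scope.

Section Gen.
Variable R : comNzRingType.
Local Notation nonunit := (@nonunit R).
Implicit Types u v a : R.
Lemma nonunitP (x : R) : nonunit x <-> ~ exists y, x * y = 1.
Proof. by rewrite /nonunit; split => [/negP H E|H]; [apply: H; apply/asboolP|apply/negP => /asboolP]. Qed.

Lemma gnuMl a u : nonunit u -> nonunit (a * u).
Proof.
move/nonunitP => h; apply/nonunitP => [[y hy]]; apply: h; exists (a * y).
by rewrite mulrCA mulrA.
Qed.
Lemma gnuMr a u : nonunit u -> nonunit (u * a).
Proof. by rewrite mulrC; apply: gnuMl. Qed.

Lemma msq0 : in_msq (0 : R). Proof. by exists [::]; rewrite big_nil. Qed.
Lemma msqD u v : in_msq u -> in_msq v -> in_msq (u + v).
Proof.
move=> [s1 [h1 ->]] [s2 [h2 ->]]; exists (s1 ++ s2); split; first by rewrite all_cat h1 h2.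
by rewrite big_cat.
Qed.
Lemma msqMl a u : in_msq u -> in_msq (a * u).
Proof.
move=> [s [h ->]]; exists [seq (a * p.1, p.2) | p <- s]; split.
  by rewrite all_map; apply/allP => p /(allP h) /andP [h1 h2] /=; rewrite gnuMl.
by rewrite big_map big_distrr /=; apply: eq_bigr => p _; rewrite mulrA.
Qed.
Lemma msqN u : in_msq u -> in_msq (- u).
Proof. by move=> h; rewrite -mulN1r; apply: msqMl. Qed.
Lemma msqB u v : in_msq u -> in_msq v -> in_msq (u - v).
Proof. by move=> h1 h2; apply: msqD => //; apply: msqN. Qed.
Lemma msq_sum (I : Type) (r : seq I) (P : pred I) (F : I -> R) :
  (forall i, P i -> in_msq (F i)) -> in_msq (\sum_(i <- r | P i) F i).
Proof. move=> h; elim/big_ind: _ => //; [exact: msq0 | exact: msqD]. Qed.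
Lemma msq_mul u v : nonunit u -> nonunit v -> in_msq (u * v).
Proof. by move=> h1 h2; exists [:: (u, v)]; rewrite /= h1 h2 big_seq1. Qed.

Definition lc (c : nat -> R) (s : seq R) := \sum_(0 <= i < size s) c i * s`_i.

Lemma genE s x : gen s x <-> exists c, x = lc c s.
Proof.
split => [[c ->]|[c ->]].
  by exists (fun i => c`_i); rewrite /lc big_mkord.
exists (mkseq c (size s)); rewrite /lc big_mkord; apply: eq_bigr => i _.
by rewrite nth_mkseq.
Qed.

Lemma lc_ext c d s : (forall i, (i < size s)%N -> c i = d i) -> lc c s = lc d s.
Proof. by move=> h; apply: eq_big_nat => i /andP [_ hi]; rewrite h. Qed.

Lemma lc_cat c s t : lc c (s ++ t) = lc c s + lc (fun i => c (size s + i)%N) t.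
Proof.
rewrite /lc size_cat (@big_cat_nat _ _ _ (size s) 0 (size s + size t) _ _ (leq0n _) (leq_addr _ _)) /=; congr (_ + _).
  by apply: eq_big_nat => i /andP [_ hi]; rewrite nth_cat hi.
rewrite -{1}(add0n (size s)) big_addn addKn; apply: eq_big_nat => i _.
by rewrite nth_cat ltnNge leq_addl /= addnK addnC.
Qed.

Lemma lcD c d s : lc (fun i => c i + d i) s = lc c s + lc d s.
Proof. by rewrite /lc -big_split /=; apply: eq_bigr => i _; rewrite mulrDl. Qed.
Lemma lcZ a c s : lc (fun i => a * c i) s = a * lc c s.
Proof. by rewrite /lc big_distrr /=; apply: eq_bigr => i _; rewrite mulrA. Qed.
Lemma lcN c s : lc (fun i => - c i) s = - lc c s.
Proof. by rewrite -mulN1r -lcZ; apply: lc_ext => i _; rewrite mulN1r. Qed.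
Lemma lc0 s : lc (fun _ => 0) s = 0.
Proof. by rewrite /lc big1 // => i _; rewrite mul0r. Qed.
Lemma lc_sum (I : Type) (r : seq I) (F : I -> nat -> R) s :
  lc (fun i => \sum_(j <- r) F j i) s = \sum_(j <- r) lc (F j) s.
Proof.
rewrite /lc exchange_big /=; apply: eq_bigr => i _; by rewrite mulr_suml.
Qed.
Lemma lc_swap k (c : nat -> R) (e : nat -> nat -> R) s :
  \sum_(0 <= j < k) c j * lc (e j) s = lc (fun i => \sum_(0 <= j < k) c j * e j i) s.
Proof. by rewrite lc_sum; apply: eq_bigr => j _; rewrite lcZ. Qed.
Lemma lc_delta p s : (p < size s)%N -> lc (fun i => (i == p)%:R) s = s`_p.
Proof.
move=> hp; rewrite /lc (@big_cat_nat _ _ _ p 0 (size s) _ _ (leq0n _) (ltnW hp)) /= (@big_ltn _ _ _ p (size s) _ hp) /=.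
rewrite eqxx mul1r big1_seq ?add0r; last first.
  by move=> i /andP [_]; rewrite mem_index_iota => /andP [_ hi]; rewrite (ltn_eqF hi) mul0r.
rewrite big1_seq ?addr0 // => i /andP [_]; rewrite mem_index_iota => /andP [hi _].
by rewrite eq_sym (ltn_eqF hi) mul0r.
Qed.


Lemma gen_lc z s c : (forall i, (i < size s)%N -> gen z s`_i) -> gen z (lc c s).
Proof.
move=> h; rewrite /lc big_seq; apply: (big_ind (gen z)).
- by apply/genE; exists (fun _ => 0); rewrite lc0.
- by move=> x y /genE [d1 ->] /genE [d2 ->]; apply/genE; exists (fun i => d1 i + d2 i); rewrite lcD.
- move=> i; rewrite mem_index_iota => /andP [_ /h /genE [d ->]].
  by apply/genE; exists (fun j => c i * d j); rewrite lcZ.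
Qed.

Definition ofo n (f : 'I_n -> R) : nat -> R :=
  fun m => if insub m is Some o then f o else 0.
Lemma ofoE n (f : 'I_n -> R) (o : 'I_n) : ofo f o = f o.
Proof. by rewrite /ofo valK. Qed.
Lemma sum_ofo n (f : 'I_n -> R) (g : nat -> R) :
  \sum_(0 <= i < n) ofo f i * g i = \sum_(i < n) f i * g i.
Proof. by rewrite big_mkord; apply: eq_bigr => i _; rewrite ofoE. Qed.

Lemma lc_cons c x t : lc c (x :: t) = c 0%N * x + lc (fun i => c i.+1) t.
Proof. by rewrite -cat1s lc_cat /lc /= big_nat1. Qed.

Definition rm (s : seq R) i0 := take i0 s ++ drop i0.+1 s.
Lemma size_rm s i0 : (i0 < size s)%N -> size (rm s i0) = (size s).-1.
Proof. move=> h; rewrite /rm size_cat size_takel ?size_drop; lia. Qed.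
Lemma lc_rm c s i0 : (i0 < size s)%N ->
  lc c s = c i0 * s`_i0 + lc (fun p => c (if (p < i0)%N then p else p.+1)) (rm s i0).
Proof.
move=> h; rewrite {1}(_ : s = take i0 s ++ (s`_i0 :: drop i0.+1 s)); last first.
  by rewrite -drop_nth // cat_take_drop.
rewrite lc_cat lc_cons /rm lc_cat !(size_takel (ltnW h)) addn0 addrCA.
 congr (_ + _); congr (_ + _).
  by apply: lc_ext => i; rewrite (size_takel (ltnW h)) => ->.
by apply: lc_ext => i _; rewrite ltnNge leq_addr /= addnS.
Qed.
Lemma nth_rm s i0 i : (i0 < size s)%N -> (i < size s)%N -> i != i0 ->
  exists2 p, (p < size (rm s i0))%N & (rm s i0)`_p = s`_i.
Proof.
move=> h0 hi ne; rewrite size_rm // /rm.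
case: (ltnP i i0) => hii.
  by exists i; [lia | rewrite nth_cat (size_takel (ltnW h0)) hii nth_take].
exists i.-1; first lia.
rewrite nth_cat (size_takel (ltnW h0)) ltnNge (_ : (i0 <= i.-1)%N) /=; last lia.
by rewrite nth_drop; congr nth; lia.
Qed.
End Gen.

Lemma lc_map (R S : comNzRingType) (f : {rmorphism R -> S}) c s :
  f (lc c s) = lc (fun i => f (c i)) (map f s).
Proof.
rewrite /lc size_map rmorph_sum; apply: eq_big_nat => i /andP [_ hi].
by rewrite rmorphM (nth_map 0).
Qed.

Section Loc.
Variables (R : comNzRingType) (Hloc : local_ring R).


Lemma nonunit_closed : idealr_closed (@nonunit R : pred R).
Proof.
case: Hloc => H0 HD; split.
- exact: H0.
- by apply/negP => /nonunitP; apply; exists 1; rewrite mulr1.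
- by move=> a u v Hu Hv; apply: HD.
Qed.

Definition mI := fun x : R => nonunit x.
HB.instance Definition _ := isIdealr.Build R mI nonunit_closed.

Definition mII : idealr R := mI.
Definition ResF := {ideal_quot mII}.
HB.instance Definition _ := GRing.ComNzRing.on ResF.
Definition res : R -> ResF := \pi_({ideal_quot mII})%qT.
Lemma res_is_zmod : zmod_morphism res.
Proof. exact: pi_is_zmod_morphism. Qed.
Lemma res_is_monoid : monoid_morphism res.
Proof. exact: pi_is_monoid_morphism. Qed.
HB.instance Definition _ := GRing.isZmodMorphism.Build R ResF res res_is_zmod.
HB.instance Definition _ := GRing.isMonoidMorphism.Build R ResF res res_is_monoid.

Lemma res_eq0 x : (res x == 0) = nonunit x.
Proof.
have -> : (0 : ResF) = res 0 by rewrite rmorph0.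
by rewrite /res -Quotient.idealrBE subr0.
Qed.

Definition lift (q : ResF) : R := repr (q : {ideal_quot mII}).
Lemma liftK q : res (lift q) = q.
Proof. exact: reprK. Qed.

Lemma res_eq0P x : res x = 0 <-> nonunit x.
Proof. by rewrite -res_eq0; split => [->|/eqP]. Qed.

Lemma unitP (x : R) : ~ nonunit x -> exists y, x * y = 1.
Proof. by move=> H; apply: NNPP => H2; apply: H; apply/nonunitP. Qed.

Definition rinv (x : R) : R := epsilon (inhabits 0) (fun y => x * y = 1).
Lemma rinvP x : ~ nonunit x -> x * rinv x = 1.
Proof. by move/unitP => H; apply: (epsilon_spec (inhabits 0) _ H). Qed.

Definition finv (q : ResF) : ResF := if q == 0 then 0 else res (rinv (lift q)).

Lemma finv_mulVf q : q != 0 -> finv q * q = 1.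
Proof.
move=> q0; rewrite /finv (negPf q0).
have nu : ~ nonunit (lift q) by move/res_eq0P; rewrite liftK => /eqP; rewrite (negPf q0).
by rewrite -{2}(liftK q) -rmorphM mulrC rinvP // rmorph1.
Qed.
Lemma finv0 : finv 0 = 0.
Proof. by rewrite /finv eqxx. Qed.

HB.instance Definition _ := GRing.ComNzRing_isField.Build ResF finv_mulVf finv0.






Local Notation nonunit := (@nonunit R).
Lemma nu_res x : nonunit x -> res x = 0. Proof. by move/res_eq0P. Qed.
Lemma res_nu x : res x = 0 -> nonunit x. Proof. by move/res_eq0P. Qed.
Lemma nu0 : nonunit (0 : R). Proof. by apply: res_nu; rewrite rmorph0. Qed.
Lemma nu1 : ~ nonunit (1 : R). Proof. by move/nu_res/eqP; rewrite rmorph1 oner_eq0. Qed.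
Lemma nuMl a u : nonunit u -> nonunit (a * u).
Proof. by move/nu_res => h; apply: res_nu; rewrite rmorphM /= h mulr0. Qed.
Lemma nuMr a u : nonunit u -> nonunit (u * a).
Proof. by move=> h; rewrite mulrC; apply: nuMl. Qed.
Lemma nuD u v : nonunit u -> nonunit v -> nonunit (u + v).
Proof. by move/nu_res => h1 /nu_res h2; apply: res_nu; rewrite rmorphD /= h1 h2 addr0. Qed.
Lemma nuN u : nonunit u -> nonunit (- u).
Proof. by move/nu_res => h1; apply: res_nu; rewrite rmorphN /= h1 oppr0. Qed.
Lemma nuB u v : nonunit u -> nonunit v -> nonunit (u - v).
Proof. by move=> h1 h2; apply: nuD => //; apply: nuN. Qed.
Lemma nu_sum (I : Type) (r : seq I) (P : pred I) (F : I -> R) :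
  (forall i, P i -> nonunit (F i)) -> nonunit (\sum_(i <- r | P i) F i).
Proof. move=> h; apply: res_nu; rewrite rmorph_sum /= big1 // => i /h /nu_res //. Qed.
Lemma unit_inv x : ~ nonunit x -> exists t, t * x = 1.
Proof. by move/unitP => [t h]; exists t; rewrite mulrC. Qed.


Lemma msq_nu u : in_msq u -> nonunit u.
Proof.
move=> [s [h ->]]; rewrite big_seq; apply: nu_sum => p /(allP h) /andP [h1 _].
exact: nuMr.
Qed.

Lemma lc_nu s c : all nonunit s -> nonunit (lc c s).
Proof.
move=> h; rewrite /lc big_seq; apply: nu_sum => i; rewrite mem_index_iota => /andP [_ hi].
by apply: nuMl; apply: (all_nthP 0 h).
Qed.

Lemma lc_msq s c : all nonunit s -> (forall i, (i < size s)%N -> nonunit (c i)) ->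
  in_msq (lc c s).
Proof.
move=> h hc; rewrite /lc big_seq; apply: msq_sum => i; rewrite mem_index_iota => /andP [_ hi].
by apply: msq_mul; [apply: hc | apply: (all_nthP 0 h)].
Qed.

Definition generating (y : seq R) := forall x, nonunit x <-> gen y x.

Lemma generating_nu y : generating y -> all nonunit y.
Proof.
move=> hy; apply/(all_nthP 0) => i hi; apply/hy/genE.
by exists (fun j => (j == i)%:R); rewrite lc_delta.
Qed.

Lemma msq_coef y q : generating y -> in_msq q ->
  exists d, (forall i, nonunit (d i)) /\ q = lc d y.
Proof.
move=> hy [ps [h ->]]; elim: ps h => [|p ps IH] /=.
  by move=> _; exists (fun _ => 0); split; [move=> _; exact: nu0 | rewrite big_nil lc0].
rewrite big_cons; case/andP => /andP [h1 h2] /IH [d [hd ->]].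
have /genE [e he] := (proj1 (hy _) h2).
exists (fun i => p.1 * e i + d i); split.
  by move=> i; apply: nuD => //; apply: nuMr.
by rewrite lcD lcZ he.
Qed.

Definition indep (s : seq R) :=
  forall c, in_msq (lc c s) -> forall i, (i < size s)%N -> nonunit (c i).
Definition spanm (s : seq R) x := exists c, in_msq (x - lc c s).

Lemma spanm_lc s x c : x = lc c s -> spanm s x.
Proof. by move=> ->; exists c; rewrite subrr; exact: msq0. Qed.

Lemma LA1 k d (E : nat -> nat -> R) : (d < k)%N ->
  exists c : nat -> R, (exists2 j, (j < k)%N & ~ nonunit (c j)) /\
    forall l, (l < d)%N -> nonunit (\sum_(0 <= j < k) c j * E j l).
Proof.
case: k => // k hdk.
pose M : 'M[ResF]_(k.+1, d) := \matrix_(j, l) res (E j l).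
have nf : ~ (forall v : 'rV_k.+1, v *m M = 0 -> v = 0).
  move=> H; have := inj_row_free H; rewrite /row_free => /eqP hr.
  by have := rank_leq_col M; rewrite hr leqNgt hdk.
have [v hv'] := not_all_ex_not _ _ nf.
have [hv vn0] := imply_to_and _ _ hv'.
have [j0 hj0] : exists j0, v 0 j0 <> 0.
  apply: NNPP => H; apply: vn0; apply/rowP => j; rewrite mxE.
  by apply: NNPP => H2; apply: H; exists j.
exists (fun j => lift (v 0 (inord j))); split.
  exists j0 => //; rewrite inord_val => /nu_res; by rewrite liftK.
move=> l hl; apply: res_nu; rewrite rmorph_sum /= big_mkord.
have h0 := congr1 (fun m : 'rV_d => m 0 (Ordinal hl)) hv; rewrite !mxE in h0.
apply: (etrans _ h0); by apply: eq_bigr => j _; rewrite rmorphM /= liftK inord_val mxE.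
Qed.

Lemma LA2 k r (a : nat -> nat -> R) :
  (forall c : nat -> R, (forall i, (i < r)%N -> nonunit (\sum_(0 <= j < k) c j * a j i)) ->
     forall j, (j < k)%N -> nonunit (c j)) ->
  exists P : nat -> nat -> R, forall j l, (j < k)%N -> (l < k)%N ->
    nonunit (\sum_(0 <= i < r) a j i * P i l - (j == l)%:R).
Proof.
case: k => [|k] H; first by exists (fun _ _ => 0).
case: r H => [|r] H.
  by exfalso; apply: nu1; apply: (H (fun _ => 1) _ 0%N).
pose M : 'M[ResF]_(k.+1, r.+1) := \matrix_(j, i) res (a j i).
have fr : row_free M.
  apply: inj_row_free => v hv; apply/rowP => j; rewrite mxE.
  have hc : forall i, (i < r.+1)%N ->
      nonunit (\sum_(0 <= j0 < k.+1) lift (v 0 (inord j0)) * a j0 i).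
    move=> i hi; apply: res_nu; rewrite rmorph_sum /= big_mkord.
    have h0 := congr1 (fun m : 'rV_r.+1 => m 0 (Ordinal hi)) hv; rewrite !mxE in h0.
    apply: (etrans _ h0); by apply: eq_bigr => j' _; rewrite rmorphM /= liftK inord_val mxE.
  have := H _ hc j (ltn_ord j).
  by rewrite inord_val => /nu_res; rewrite liftK.
have [B hB] := row_freeP fr.
exists (fun i l => lift (B (inord i) (inord l))) => j l hj hl.
apply: res_nu; rewrite rmorphB /= rmorph_sum /= rmorph_nat big_mkord.
have := congr1 (fun m : 'M_k.+1 => m (inord j) (inord l)) hB; rewrite !mxE.
rewrite (_ : (inord j == inord l :> 'I_k.+1) = (j == l)); last first.
  by apply/eqP/eqP => [h|->] //; move/(congr1 val): h; rewrite /= !inordK.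
move=> <-; apply/eqP; rewrite subr_eq0; apply/eqP; apply: eq_bigr => i _.
by rewrite rmorphM /= liftK inord_val mxE inordK.
Qed.

Lemma spanm_all s x : (forall i, (i < size s)%N -> spanm x s`_i) -> forall i, spanm x s`_i.
Proof.
move=> h i; case: (ltnP i (size s)) => hi; first exact: h.
by rewrite nth_default //; exists (fun _ => 0); rewrite lc0 subrr; exact: msq0.
Qed.

Lemma lc_nil (c : nat -> R) : lc c [::] = 0.
Proof. by rewrite /lc big_geq. Qed.

Lemma nakayama y z : generating y -> (forall i, (i < size y)%N -> spanm z y`_i) ->
  forall x, nonunit x -> gen z x.
Proof.
move=> hy hs.
have [C hC] := choice (spanm_all hs).
have hD' : forall i, exists d, (forall k, nonunit (d k)) /\ y`_i - lc (C i) z = lc d y.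
  by move=> i; apply: msq_coef.
have [D hD] := choice hD'.
suff hyz : forall i, (i < size y)%N -> gen z y`_i.
  by move=> x /hy /genE [c ->]; exact: gen_lc.
pose s := size y.
pose N : 'M[R]_s := 1%:M - \matrix_(i, k) D i k.
pose Cm : 'M[R]_(s, size z) := \matrix_(i, l) C i l.
pose Y : 'cV[R]_s := \col_i y`_i.
pose Z : 'cV[R]_(size z) := \col_l z`_l.
have eNY : N *m Y = Cm *m Z.
  apply/colP => i; rewrite mulmxBl mul1mx !mxE.
  have e1 : \sum_k (\matrix_(i, k) D i k : 'M[R]_s) i k * Y k 0 = lc (D i) y.
    by rewrite /lc big_mkord; apply: eq_bigr => k _; rewrite !mxE.
  have e2 : \sum_k Cm i k * Z k 0 = lc (C i) z.
    by rewrite /lc big_mkord; apply: eq_bigr => k _; rewrite !mxE.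
  rewrite e1 e2 -(proj2 (hD i)); ring.
have detU : ~ nonunit (\det N).
  move/nu_res; rewrite -det_map_mx (_ : map_mx res N = 1%:M) ?det1; last first.
    apply/matrixP => i k; rewrite !mxE rmorphB /= rmorphMn /= rmorph1.
    by rewrite (nu_res (proj1 (hD i) k)) subr0.
  by move/eqP; rewrite oner_eq0.
have [t ht] := unit_inv detU.
have eY : Y = t *: (\adj N *m (Cm *m Z)).
  by rewrite -eNY (mulmxA (\adj N) N Y) mul_adj_mx mul_scalar_mx scalerA ht scale1r.
rewrite (mulmxA (\adj N) Cm Z) in eY.
set A := \adj N *m Cm in eY.
move=> i hi; apply/genE.
exists (ofo (fun l : 'I_(size z) => t * A (Ordinal hi) l)).
have := congr1 (fun M : 'cV[R]_s => M (Ordinal hi) 0) eY; rewrite !mxE /= => ->.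
rewrite /lc sum_ofo mulr_sumr; apply: eq_bigr => l _.
by rewrite !mxE mulrA.
Qed.

Lemma spanm_mem s p : (p < size s)%N -> spanm s s`_p.
Proof. by move=> hp; apply: (@spanm_lc _ _ (fun j => (j == p)%:R)); rewrite lc_delta. Qed.

Lemma mb_indep (x : seq R) : minimal_basis x -> indep x.
Proof.
move=> [hg hmin] c hc i0 hi0; apply: NNPP => hu.
have [t ht] := unit_inv hu.
have hnu := generating_nu hg.
pose x' := rm x i0.
have hnu' : all nonunit x'.
  apply/allP => a; rewrite mem_cat => /orP [/mem_take|/mem_drop] ha; exact: (allP hnu).
have hgen' : generating x'.
  move=> a; split; last by move/genE => [d ->]; exact: lc_nu.
  apply: (nakayama hg) => i hi.
  case: (eqVneq i i0) => [->|ne].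
    exists (fun p => - t * c (if (p < i0)%N then p else p.+1)).
    rewrite lcZ.
    have e := lc_rm c hi0.
    have -> : x`_i0 - - t * lc (fun p => c (if (p < i0)%N then p else p.+1)) x' = t * lc c x.
      rewrite e mulrDr mulrA ht mul1r; ring.
    exact: msqMl.
  have [p hp ep] := nth_rm hi0 hi ne.
  by rewrite -ep; apply: spanm_mem.
have := hmin _ hgen'; rewrite size_rm //; lia.
Qed.

Lemma steinitz w u : indep w -> all nonunit u ->
  (forall j, (j < size w)%N -> spanm u w`_j) -> (size w <= size u)%N.
Proof.
move=> hw hu hs; rewrite leqNgt; apply/negP => hlt.
have [e he] := choice (spanm_all hs).
have [c [[j0 hj0 hc0] hc]] := LA1 e hlt.
apply: hc0; apply: (hw c) => //.
have -> : lc c w = \sum_(0 <= j < size w) c j * (w`_j - lc (e j) u) +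
    lc (fun l => \sum_(0 <= j < size w) c j * e j l) u.
  rewrite -lc_swap -big_split [lc c w]/lc /=; apply: eq_bigr => j _.
  by rewrite -mulrDr subrK.
apply: msqD.
  by apply: msq_sum => j _; apply: msqMl; exact: he.
by apply: lc_msq => // l hl; exact: hc.
Qed.

Lemma indep_le (x w : seq R) : minimal_basis x -> indep w -> all nonunit w -> (size w <= size x)%N.
Proof.
move=> [hg _] hw hwn; apply: steinitz => //; first exact: generating_nu.
move=> j hj; have /hg /genE [d ->] := all_nthP 0 hwn j hj.
exact: spanm_lc.
Qed.

Lemma spanm_trans s u a : (forall i, (i < size s)%N -> spanm u s`_i) -> spanm s a -> spanm u a.
Proof.
move=> hs [c hc]; have [e he] := choice (spanm_all hs).
exists (fun l => \sum_(0 <= i < size s) c i * e i l).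
rewrite -lc_swap.
have e1 : \sum_(0 <= i < size s) c i * (s`_i - lc (e i) u) =
    lc c s - \sum_(0 <= j < size s) c j * lc (e j) u.
  by rewrite [lc c s]/lc -sumrB; apply: eq_bigr => i _; rewrite mulrBr.
have -> : a - \sum_(0 <= j < size s) c j * lc (e j) u =
    (a - lc c s) + (lc c s - \sum_(0 <= j < size s) c j * lc (e j) u) by ring.
rewrite -e1.
by apply: msqD => //; apply: msq_sum => i _; apply: msqMl.
Qed.

Lemma spanm_lin u r a b : spanm u a -> spanm u b -> spanm u (r * a + b).
Proof.
move=> [c1 h1] [c2 h2]; exists (fun i => r * c1 i + c2 i).
rewrite lcD lcZ.
have -> : r * a + b - (r * lc c1 u + lc c2 u) = r * (a - lc c1 u) + (b - lc c2 u) by ring.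
by apply: msqD => //; apply: msqMl.
Qed.

Lemma spanm_catr z y a : spanm z a -> spanm (z ++ y) a.
Proof.
move=> [c hc]; exists (fun i => if (i < size z)%N then c i else 0).
rewrite lc_cat (@lc_ext _ _ c z); last by move=> i ->.
rewrite (@lc_ext _ _ (fun _ => 0) y) ?lc0 ?addr0 // => i _.
by rewrite ltnNge leq_addr.
Qed.

Lemma indep_snoc z a : indep z -> ~ spanm z a -> nonunit a -> indep (z ++ [:: a]).
Proof.
move=> hz hns ha c hc.
have e : lc c (z ++ [:: a]) = lc c z + c (size z) * a by rewrite lc_cat lc_cons lc_nil addn0 addr0.
have hcz : nonunit (c (size z)).
  apply: NNPP => hu; apply: hns; have [t ht] := unit_inv hu.
  exists (fun i => - t * c i); rewrite lcZ.
  have -> : a - - t * lc c z = t * lc c (z ++ [:: a]) by rewrite e mulrDr mulrA ht mul1r; ring.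
  exact: msqMl.
have hcz' : in_msq (lc c z).
  have -> : lc c z = lc c (z ++ [:: a]) - c (size z) * a by rewrite e; ring.
  by apply: msqB => //; apply: msq_mul.
move=> i; rewrite size_cat addn1 ltnS leq_eqVlt => /orP [/eqP ->|hi] //.
exact: hz.
Qed.

Lemma greedy t : forall z, indep z -> all nonunit z -> all nonunit t ->
  exists y', [/\ indep (z ++ y'), all nonunit y' &
                 forall i, (i < size t)%N -> spanm (z ++ y') t`_i].
Proof.
elim: t => [|a t IH] z hz hzn htn.
  by exists [::]; rewrite cats0; split.
move: htn => /andP [ha htn].
case: (Classical_Prop.classic (spanm z a)) => hsp.
  have [y' [h1 h2 h3]] := IH z hz hzn htn.
  exists y'; split => // -[|i] /= hi; last exact: h3.
  exact: spanm_catr.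
have hz' := indep_snoc hz hsp ha.
have hzn' : all nonunit (z ++ [:: a]) by rewrite all_cat hzn /= ha.
have [y' [h1 h2 h3]] := IH _ hz' hzn' htn.
exists (a :: y'); rewrite -cat1s catA; split => //=; first by rewrite ha.
move=> [|i] hi /=; last exact: h3.
have e : ((z ++ [:: a]) ++ y')`_(size z) = a.
  by rewrite nth_cat size_cat /= addn1 ltnSn nth_cat ltnn subnn.
have : spanm ((z ++ [:: a]) ++ y') ((z ++ [:: a]) ++ y')`_(size z).
  by apply: spanm_mem; rewrite !size_cat /=; lia.
by rewrite e.
Qed.

Lemma extend (y z : seq R) : minimal_basis y -> indep z -> all nonunit z ->
  exists y', minimal_basis (z ++ y').
Proof.
move=> [hg hmin] hz hzn.
have [y' [h1 h2 h3]] := greedy hz hzn (generating_nu hg).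
have hall : all nonunit (z ++ y') by rewrite all_cat hzn h2.
exists y'; split.
  move=> a; split; first exact: (nakayama hg h3).
  by move/genE => [d ->]; exact: lc_nu.
move=> t ht; apply: steinitz => //; first exact: generating_nu.
move=> j hj; have /ht /genE [d ->] := all_nthP 0 hall j hj.
exact: spanm_lc.
Qed.

Lemma mb_exists : noetherian R -> exists x : seq R, minimal_basis x.
Proof.
move=> hn; have [s hs] := hn (fun x => nonunit x) Hloc.
suff : forall n (s : seq R), (size s <= n)%N -> generating s -> exists x : seq R, minimal_basis x.
  by move/(_ _ s (leqnn _)); apply.
elim => [|n IH] s' hsz hs'.
  by exists s'; split => // z _; move: hsz; rewrite leqn0 => /eqP ->.
case: (Classical_Prop.classic (forall z, generating z -> (size s' <= size z)%N)) => h.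
  by exists s'; split.
have [z hz] := not_all_ex_not _ _ h.
have [hz1 hz2] := imply_to_and _ _ hz.
apply: (IH z) => //; lia.
Qed.

Lemma rm_span (s : seq R) c i0 : in_msq (lc c s) -> (i0 < size s)%N -> ~ nonunit (c i0) ->
  forall i, (i < size s)%N -> spanm (rm s i0) s`_i.
Proof.
move=> hc hi0 hu i hi; have [t ht] := unit_inv hu.
case: (eqVneq i i0) => [->|ne].
  exists (fun p => - t * c (if (p < i0)%N then p else p.+1)).
  rewrite lcZ.
  have e := lc_rm c hi0.
  have -> : s`_i0 - - t * lc (fun p => c (if (p < i0)%N then p else p.+1)) (rm s i0) = t * lc c s.
    rewrite e mulrDr mulrA ht mul1r; ring.
  exact: msqMl.
have [p hp ep] := nth_rm hi0 hi ne.
by rewrite -ep; apply: spanm_mem.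
Qed.

Lemma all_rm (s : seq R) i0 : all nonunit s -> all nonunit (rm s i0).
Proof.
move=> hnu; apply/allP => a; rewrite mem_cat => /orP [/mem_take|/mem_drop] ha; exact: (allP hnu).
Qed.

Lemma sum_delta (c : nat -> R) n l : (l < n)%N -> \sum_(0 <= j < n) c j * (j == l)%:R = c l.
Proof.
move=> hl; rewrite (@big_cat_nat _ _ _ l 0 n _ _ (leq0n _) (ltnW hl)) /= (@big_ltn _ _ _ l n _ hl) /=.
rewrite eqxx mulr1 big1_seq ?add0r; last first.
  by move=> i /andP [_]; rewrite mem_index_iota => /andP [_ hi]; rewrite (ltn_eqF hi) mulr0.
rewrite big1_seq ?addr0 // => i /andP [_]; rewrite mem_index_iota => /andP [hi _].
by rewrite eq_sym (ltn_eqF hi) mulr0.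
Qed.

Lemma lc_catl (c : nat -> R) (z y : seq R) :
  lc c z = lc (fun i => if (i < size z)%N then c i else 0) (z ++ y).
Proof.
rewrite lc_cat (@lc_ext _ _ c z); last by move=> i ->.
by rewrite (@lc_ext _ _ (fun _ => 0) y) ?lc0 ?addr0 // => i _; rewrite ltnNge leq_addr.
Qed.

Definition Ind (P : R -> Prop) k :=
  exists h : seq R, [/\ size h = k, forall i, (i < k)%N -> P h`_i & indep h].

End Loc.

Section Quot.
Variables (R : comNzRingType) (Hloc : local_ring R) (J : idealr R).
Local Notation nonunit := (@nonunit R).
Local Notation Q := {ideal_quot J}.
Local Notation pi := (canon_surj J).

Lemma pi_zmod : zmod_morphism pi. Proof. exact: pi_is_zmod_morphism. Qed.
Lemma pi_monoid : monoid_morphism pi. Proof. exact: pi_is_monoid_morphism. Qed.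
HB.instance Definition _ := GRing.isZmodMorphism.Build R Q pi pi_zmod.
HB.instance Definition _ := GRing.isMonoidMorphism.Build R Q pi pi_monoid.

Lemma piK (q : Q) : pi (repr q) = q. Proof. exact: reprK. Qed.

Lemma J_nu a : a \in J -> nonunit a.
Proof.
move=> ha; apply/nonunitP => [[y hy]].
by have := idealMr y ha; rewrite mulrC hy idealr1.
Qed.

Lemma piP a b : pi a = pi b <-> a - b \in J.
Proof. rewrite Quotient.idealrBE /canon_surj; split => [->|/eqP] //. Qed.

Lemma nuQ a : @Defs.nonunit Q (pi a) <-> nonunit a.
Proof.
split => h.
  apply/nonunitP => [[y hy]]; move/nonunitP: h; apply; exists (pi y).
  by rewrite -rmorphM /= hy rmorph1.
apply/nonunitP => [[q hq]].
have : pi (a * repr q) = pi 1 by rewrite rmorphM /= piK hq rmorph1.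
move/piP/(J_nu) => h2.
apply: (nu1 Hloc); have -> : (1 : R) = a * repr q - (a * repr q - 1) by ring.
by apply: nuB => //; apply: nuMr.
Qed.

Lemma msqQ a : in_msq (pi a) <-> exists b, in_msq b /\ a - b \in J.
Proof.
split.
  move=> [s [hs e]].
  exists (\sum_(p <- s) repr p.1 * repr p.2); split.
    exists [seq (repr p.1, repr p.2) | p <- s]; split; last by rewrite big_map.
    rewrite all_map; apply/allP => p /(allP hs) /andP [h1 h2] /=.
    by apply/andP; split; apply/nuQ; rewrite piK.
  apply/piP; rewrite e rmorph_sum /=; apply: eq_bigr => p _.
  by rewrite rmorphM /= !piK.
move=> [b [[s [hs ->]] hab]].
move/piP: hab => ->.
exists [seq (pi p.1, pi p.2) | p <- s]; split.
  rewrite all_map; apply/allP => p /(allP hs) /andP [h1 h2] /=.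
  by apply/andP; split; apply/nuQ.
by rewrite big_map rmorph_sum /=; apply: eq_bigr => p _; rewrite rmorphM.
Qed.

Lemma nth_enum_map k (H : 'I_k -> R) (j : 'I_k) : [seq H i | i <- enum 'I_k]`_j = H j.
Proof. by rewrite (nth_map j) ?size_enum_ord // nth_ord_enum. Qed.

Lemma lemmaA (x : seq R) k : minimal_basis x ->
  ker_family pi x k <-> Ind (fun a => a \in J) k.
Proof.
move=> hx; have hxi := mb_indep Hloc hx.
have hxn := generating_nu hx.1.
split.
  move=> [v [hv hind]].
  have hb : forall j : 'I_k, exists b, in_msq b /\
      (\sum_(i < size x) x`_i * repr (v j i)) - b \in J.
    move=> j; apply/msqQ; rewrite rmorph_sum /=.
    by rewrite (eq_bigr (fun i : 'I_(size x) => pi x`_i * v j i)) // => i _; rewrite rmorphM /= piK.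
  have [b hb'] := choice hb.
  pose H j := \sum_(i < size x) x`_i * repr (v j i) - b j.
  exists [seq H j | j <- enum 'I_k]; split.
  - by rewrite size_map size_enum_ord.
  - by move=> i hi; rewrite (nth_enum_map H (Ordinal hi)); exact: (proj2 (hb' _)).
  move=> c hc i hi.
  have e1 : lc c [seq H j | j <- enum 'I_k] = \sum_(j < k) c j * H j.
    rewrite /lc size_map size_enum_ord big_mkord; apply: eq_bigr => j _.
    by rewrite nth_enum_map.
  rewrite e1 in hc.
  rewrite size_map size_enum_ord in hi.
  pose f (i : 'I_(size x)) := \sum_(j < k) c (val j) * repr (v j i).
  have e2 : \sum_(j < k) c j * H j =
      lc (ofo f) x - \sum_(j < k) c j * b j.
    rewrite /lc sum_ofo /f /H.
    rewrite (eq_bigr (fun j : 'I_k => c j * (\sum_(i < size x) x`_i * repr (v j i)) - c j * b j));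
      last by move=> j _; rewrite mulrBr.
    rewrite sumrB; congr (_ - _).
    rewrite (eq_bigr (fun j : 'I_k => \sum_(i < size x) c j * repr (v j i) * x`_i)); last first.
      by move=> j _; rewrite mulr_sumr; apply: eq_bigr => i' _; ring.
    rewrite exchange_big /=; apply: eq_bigr => i' _; by rewrite mulr_suml.
  have hf : in_msq (lc (ofo f) x).
    have -> : lc (ofo f) x = \sum_(j < k) c j * H j + \sum_(j < k) c j * b j by rewrite e2; ring.
    by apply: msqD => //; apply: msq_sum => j _; apply: msqMl; exact: (proj1 (hb' j)).
  have hfi : forall i' : 'I_(size x), nonunit (f i').
    by move=> i'; have := hxi _ hf i' (ltn_ord i'); rewrite ofoE.
  have hc2 : forall i' : 'I_(size x), @Defs.nonunit Q (\sum_(j < k) pi (c j) * v j i').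
    move=> i'; have -> : \sum_(j < k) pi (c j) * v j i' = pi (f i').
      by rewrite rmorph_sum; apply: eq_bigr => j _; rewrite rmorphM /= piK.
    by apply/nuQ; exact: hfi.
  by apply/nuQ; exact: (hind _ hc2 (Ordinal hi)).
move=> [h [hs hJ hind]].
have hg : forall j, exists d, (j < k)%N -> h`_j = lc d x.
  move=> j; case: (ltnP j k) => hj.
    have /(proj1 (hx.1 _)) /genE [d ->] := J_nu (hJ j hj).
    by exists d.
  by exists (fun _ => 0) => hj2; exfalso; lia.
have [C hC] := choice hg.
exists (fun (j : 'I_k) (i : 'I_(size x)) => pi (C j i)); split.
  move=> j.
  have -> : \sum_(i < size x) pi x`_i * pi (C j i) = pi 0.
    have -> : \sum_(i < size x) pi x`_i * pi (C j i) = pi (lc (C j) x).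
      rewrite /lc big_mkord rmorph_sum /=; apply: eq_bigr => i _.
      by rewrite rmorphM /= mulrC.
    by rewrite -(hC j (ltn_ord j)); apply/piP; rewrite subr0; exact: hJ.
  by rewrite rmorph0; exact: msq0.
move=> c hc j.
pose Cc (j : 'I_k) := repr (c j).
have hcoef : forall i : 'I_(size x), nonunit (\sum_(j < k) Cc j * C j i).
  move=> i; apply/nuQ; rewrite rmorph_sum /=.
  have -> : \sum_(j < k) pi (Cc j * C j i) = \sum_(j < k) c j * pi (C j i).
    by apply: eq_bigr => j' _; rewrite rmorphM /= piK.
  exact: hc.
have hm : in_msq (lc (ofo Cc) h).
  have -> : lc (ofo Cc) h = lc (fun i => \sum_(0 <= j < k) ofo Cc j * C j i) x.
    rewrite -lc_swap [lc _ h]/lc hs; apply: eq_big_nat => j' /andP [_ hj'].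
    by rewrite (hC j' hj').
  apply: lc_msq => // i hi; rewrite sum_ofo; exact: (hcoef (Ordinal hi)).
have := hind _ hm j; rewrite hs => /(_ (ltn_ord j)); rewrite ofoE => hnu.
by rewrite -(piK (c j)); apply/nuQ.
Qed.

Lemma Ind0 : Ind (fun a => a \in J) 0.
Proof. by exists [::]; split => // c _ i. Qed.

Lemma rd_ge (hn : noetherian R) k : Ind (fun a => a \in J) k -> (k <= rd pi)%N.
Proof.
have hex := mb_exists Hloc hn.
have hx0 := epsilon_spec (inhabits [::]) _ hex.
move: hx0; rewrite /rd /kerdim.
set x0 := epsilon _ _ => hx0 hk.
have hkle : (k < (size x0).+1)%N.
  case: hk => h [hs hJ hi]; rewrite ltnS -hs; apply: (indep_le Hloc hx0 hi).
  by apply/(all_nthP 0) => i hi'; apply: J_nu; apply: hJ; rewrite -hs.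
apply: (@leq_bigmax_cond _ _ (fun i : 'I_(size x0).+1 => nat_of_ord i) (Ordinal hkle)).
by apply/asboolP; apply/lemmaA.
Qed.

Lemma rd_att (hn : noetherian R) : Ind (fun a => a \in J) (rd pi).
Proof.
have hex := mb_exists Hloc hn.
have hx0 := epsilon_spec (inhabits [::]) _ hex.
move: hx0; rewrite /rd /kerdim.
set x0 := epsilon _ _ => hx0.
have P0 : `[< ker_family pi x0 (@ord0 (size x0)) >] by apply/asboolP; apply/lemmaA => //; exact: Ind0.
rewrite (bigmax_eq_arg ord0) //; case: arg_maxnP => // i /asboolP hi _.
exact: (proj1 (lemmaA _ hx0) hi).
Qed.
End Quot.

Section Main.
Variables (A B : comNzRingType) (phi : {rmorphism A -> B}).
Local Notation NA := (@nonunit A).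
Local Notation NB := (@nonunit B).

Lemma msq_map (hphi : forall a, NA a -> NB (phi a)) a : in_msq a -> in_msq (phi a).
Proof.
move=> [s [hs ->]]; exists [seq (phi p.1, phi p.2) | p <- s]; split.
  rewrite all_map; apply/allP => p /(allP hs) /andP [h1 h2] /=.
  by apply/andP; split; apply: hphi.
by rewrite big_map rmorph_sum; apply: eq_bigr => p _; rewrite rmorphM.
Qed.

Lemma spanm_map (hphi : forall a, NA a -> NB (phi a)) (s : seq A) a :
  spanm s a -> spanm (map phi s) (phi a).
Proof.
move=> [c hc]; exists (fun i => phi (c i)); rewrite -lc_map -rmorphB.
exact: msq_map.
Qed.

Lemma spanm_ext (Hphi : local_hom phi) (I : idealr A) (u : seq B) w :
  (forall p, p \in I -> spanm u (phi p)) -> w \in ext_ideal Hphi I -> spanm u w.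
Proof.
move=> hu /asboolP [s [hs ->]]; elim: s hs => [|p s IH] /=.
  by rewrite big_nil; exists (fun _ => 0); rewrite lc0 subrr; exact: msq0.
move/andP => [hp hs]; rewrite big_cons mulrC; apply: spanm_lin; [exact: hu | exact: IH].
Qed.

Lemma indep_map_br (Hphi : local_hom phi) (noethA : noetherian A)
  (hbr : basically_regular phi) (h : seq A) :
  indep h -> all NA h -> indep (map phi h).
Proof.
have [hA hB hphi] := Hphi.
move=> hind hhn.
have [x0 hx0] := mb_exists hA noethA.
have [y' hy'] := hbr x0 hx0.
have hzi := mb_indep hB hy'.
have hx0n := generating_nu hx0.1.
have hg : forall j, exists d, (j < size h)%N -> h`_j = lc d x0.
  move=> j; case: (ltnP j (size h)) => hj.
    have /(proj1 (hx0.1 _)) /genE [d ->] := all_nthP 0 hhn j hj.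
    by exists d.
  by exists (fun _ => 0) => hj2; exfalso; lia.
have [a ha] := choice hg.
have hrow : forall c : nat -> A,
    (forall i, (i < size x0)%N -> NA (\sum_(0 <= j < size h) c j * a j i)) ->
    forall j, (j < size h)%N -> NA (c j).
  move=> c hc; apply: hind.
  have -> : lc c h = lc (fun i => \sum_(0 <= j < size h) c j * a j i) x0.
    rewrite -lc_swap [lc c h]/lc; apply: eq_big_nat => j /andP [_ hj].
    by rewrite (ha j hj).
  exact: lc_msq.
have [P hP] := LA2 hA hrow.
move=> c hc l hl; rewrite size_map in hl.
pose e i := \sum_(0 <= j < size h) c j * phi (a j i).
have he : forall i, (i < size x0)%N -> NB (e i).
  have hm : in_msq (lc (fun i => if (i < size (map phi x0))%N then e i else 0)
                       (map phi x0 ++ y')).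
    rewrite -lc_catl.
    have -> : lc e (map phi x0) = lc c (map phi h).
      rewrite /e -lc_swap [lc c (map phi h)]/lc size_map; apply: eq_big_nat => j /andP [_ hj].
      by rewrite -lc_map -(ha j hj) (nth_map 0).
    exact: hc.
  move=> i hi; have := hzi _ hm i.
  rewrite size_cat size_map => /(_ (ltn_addr _ hi)).
  by rewrite hi.
have s1 : \sum_(0 <= j < size h) c j * phi (\sum_(0 <= i < size x0) a j i * P i l - (j == l)%:R)
    = \sum_(0 <= i < size x0) e i * phi (P i l) - c l.
  transitivity (\sum_(0 <= j < size h)
      (c j * (\sum_(0 <= i < size x0) phi (a j i) * phi (P i l)) - c j * (j == l)%:R)).
    apply: eq_bigr => j _; rewrite rmorphB /= rmorph_sum /= rmorph_nat mulrBr.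
    by congr (_ - _); congr (_ * _); apply: eq_bigr => i _; rewrite rmorphM.
  rewrite sumrB sum_delta //; congr (_ - _).
  rewrite (eq_bigr (fun j => \sum_(0 <= i < size x0) c j * phi (a j i) * phi (P i l))); last first.
    by move=> j _; rewrite mulr_sumr; apply: eq_bigr => i _; rewrite mulrA.
  by rewrite exchange_big /=; apply: eq_bigr => i _; rewrite /e mulr_suml.
have -> : c l = \sum_(0 <= i < size x0) e i * phi (P i l) -
    \sum_(0 <= j < size h) c j * phi (\sum_(0 <= i < size x0) a j i * P i l - (j == l)%:R).
  by rewrite s1; ring.
apply: nuB => //.
  rewrite big_seq; apply: nu_sum => // i; rewrite mem_index_iota => /andP [_ hi].
  by apply: nuMr => //; apply: he.
rewrite big_seq; apply: nu_sum => // j; rewrite mem_index_iota => /andP [_ hj].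
by apply: nuMl => //; apply: hphi; apply: hP.
Qed.

Lemma br_of_eq (Hphi : local_hom phi) (noethA : noetherian A) (noethB : noetherian B) :
  (forall I : idealr A, rd (canon_surj I) = rd (canon_surj (ext_ideal Hphi I))) ->
  basically_regular phi.
Proof.
have [hA hB hphi] := Hphi.
move=> heq x hx.
pose M := mII hA.
have [x0 hx0] := mb_exists hA noethA.
have hmem : forall a, (a \in M) = NA a by [].
have hxn := generating_nu hx.1.
have hge : (size x <= rd (canon_surj (ext_ideal Hphi M)))%N.
  rewrite -heq; apply: (rd_ge hA noethA); exists x; split => //.
    by move=> i hi; rewrite hmem; exact: (all_nthP 0 hxn).
  exact: (mb_indep hA hx).
have [w [hws hwJ hwi]] := rd_att hB (ext_ideal Hphi M) noethB.
have hzn : all NB (map phi x).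
  by rewrite all_map; apply/allP => a ha /=; apply: hphi; exact: (allP hxn).
have hzi : indep (map phi x).
  move=> c hc i0 hi0; apply: NNPP => hu.
  have hsp := rm_span hc hi0 hu.
  have : (size w <= size (rm (map phi x) i0))%N.
    apply: (steinitz hB hwi (all_rm _ hzn)) => j hj.
    apply: (spanm_trans hsp).
    apply: (spanm_ext (I := M)); last by apply: hwJ; rewrite -hws.
    move=> p; rewrite hmem => /(proj1 (hx.1 _)) /genE [d ->].
    by rewrite lc_map; exact: spanm_lc.
  rewrite size_rm // size_map hws => hle; have := leq_trans hge hle.
  by move: hi0; rewrite size_map; case: (size x) => // n _ /=; rewrite ltnn.
have [y0 hy0] := mb_exists hB noethB.
exact: (extend hB hy0 hzi hzn).
Qed.

End Main.

Theorem corollary2p16 (A B : comNzRingType) (phi : {rmorphism A -> B})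
  (noethA : noetherian A) (noethB : noetherian B) (Hphi : local_hom phi) :
  (forall I : idealr A,
      (rd (canon_surj (ext_ideal Hphi I)) <= rd (canon_surj I))%N) /\
  (basically_regular phi <->
     forall I : idealr A, rd (canon_surj I) = rd (canon_surj (ext_ideal Hphi I))).
Proof.
have [hA hB hphi] := Hphi.
have part1 : forall I : idealr A,
    (rd (canon_surj (ext_ideal Hphi I)) <= rd (canon_surj I))%N.
  move=> I.
  have [h [hs hI hind]] := rd_att hA I noethA.
  have hhn : all (@nonunit A) h.
    by apply/(all_nthP 0) => i hi; apply: J_nu; apply: hI; rewrite -hs.
  have hspan : forall g, g \in I -> spanm h g.
    move=> g hg; apply: NNPP => hns.
    have hi' := indep_snoc hind hns (J_nu hg).
    have : Ind (fun a => a \in I) (rd (canon_surj I)).+1.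
      exists (h ++ [:: g]); split => //.
        by rewrite size_cat hs addn1.
      move=> i hi; rewrite nth_cat hs.
      case: (ltnP i (rd (canon_surj I))) => hi2; first exact: hI.
      have -> : i = rd (canon_surj I) by lia.
      by rewrite subnn.
    by move/(rd_ge hA noethA); rewrite ltnn.
  have [w [hws hwJ hwi]] := rd_att hB (ext_ideal Hphi I) noethB.
  rewrite -hws -hs -(size_map phi h).
  apply: (steinitz hB hwi).
    by rewrite all_map; apply/allP => a ha /=; apply: hphi; exact: (allP hhn).
  move=> j hj; apply: (spanm_ext (Hphi := Hphi) (I := I)).
    by move=> p hp; apply: (spanm_map hphi); exact: hspan.
  by apply: hwJ; rewrite -hws.
split; first exact: part1.
split.
  move=> hbr I; apply/eqP; rewrite eqn_leq part1 andbT.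
  have [h [hs hI hind]] := rd_att hA I noethA.
  have hhn : all (@nonunit A) h.
    by apply/(all_nthP 0) => i hi; apply: J_nu; apply: hI; rewrite -hs.
  rewrite -{1}hs; apply: (rd_ge hB noethB); exists (map phi h); split.
  - by rewrite size_map.
  - move=> i hi; rewrite (nth_map 0) //.
    suff : ext_ideal Hphi I (phi h`_i) by [].
    apply/asboolP; exists [:: (h`_i, 1)]; split.
      by rewrite /= andbT; apply: hI; rewrite -hs.
    by rewrite big_seq1 mulr1.
  exact: indep_map_br.
exact: br_of_eq.
Qed.
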